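(* Let $B>0$ and $L\ge2$. For every $f\in\mathcal{D}(B,L)$ and all $x,y\in\mathbb{R}^p$, $|f(x)-f(y)|\le\frac B4\|x-y\|_2$ and $|f(x)-f(y)|\le2$.
   Context: $\mathcal{D}(B,L)$ is the class of networks $f:\mathbb{R}^p\to\mathbb{R}$ defined as follows: first-layer nodes are $x\mapsto\sigma(w^Tx+b)$ with $\sigma(u)=1/(1+e^{-u})$, $w\in\mathbb{R}^p$, $\|w\|_2\le B$, $b\in\mathbb{R}$; for $1\le l<L-1$, a node of layer $l+1$ is $x\mapsto\max\big(\sum_{i=1}^{d^{(l)}}w_if^{(l)}_i(x),0\big)$ with $f_i^{(l)}$ nodes of layer $l$, finite width $d^{(l)}$, and $\sum_i|w_i|\le1$; the output is $f(x)=\sum_{i=1}^{d^{(L-1)}}w_if_i^{(L-1)}(x)$ with $\sum_i|w_i|\le1$. *)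

(* Defs.v *)
From HB Require Import structures.
From mathcomp Require Import all_boot all_order all_algebra.
From mathcomp Require Import all_classical all_reals all_analysis.
Set Implicit Arguments. Unset Strict Implicit. Unset Printing Implicit Defensive.
Import Order.TTheory GRing.Theory Num.Theory.
Local Open Scope ring_scope.

Section Defs.
Variables (R : realType) (p : nat).

Definition sigmoid (u : R) : R := 1 / (1 + expR (- u)).

Definition dotv (w x : 'rV[R]_p) : R := \sum_(i < p) w 0 i * x 0 i.

Definition norm2 (x : 'rV[R]_p) : R := Num.sqrt (\sum_(i < p) x 0 i ^+ 2).

(* is_layer B l d F : F is the family of the d nodes of layer l of a network
   in D(B, _) (layers counted from 1). *)
Inductive is_layer (B : R) : nat -> forall d : nat, ('I_d -> 'rV[R]_p -> R) -> Prop :=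
| layer_first (d : nat) (W : 'I_d -> 'rV[R]_p) (b : 'I_d -> R) :
    (forall i, norm2 (W i) <= B) ->
    is_layer B 1 (fun i x => sigmoid (dotv (W i) x + b i))
| layer_next (l d d' : nat) (F : 'I_d -> 'rV[R]_p -> R) (V : 'I_d' -> 'I_d -> R) :
    is_layer B l F ->
    (forall j, \sum_(i < d) `|V j i| <= 1) ->
    is_layer B l.+1 (fun j x => Num.max (\sum_(i < d) V j i * F i x) 0).

Definition inD (B : R) (L : nat) (f : 'rV[R]_p -> R) : Prop :=
  exists (d : nat) (F : 'I_d -> 'rV[R]_p -> R) (w : 'I_d -> R),
    is_layer B L.-1 F /\ \sum_(i < d) `|w i| <= 1 /\
    f = (fun x => \sum_(i < d) w i * F i x).

End Defs.

(* Main.v *)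
Require Import Defs.
From HB Require Import structures.
From mathcomp Require Import all_boot all_order all_algebra.
From mathcomp Require Import all_classical all_reals all_analysis.
From mathcomp Require Import ring lra.
Import Order.TTheory GRing.Theory Num.Theory.
Local Open Scope classical_set_scope.
Local Open Scope ring_scope.

Section S.
Variable R : realType.

Definition dsig (u : R) : R := expR (- u) / (1 + expR (- u)) ^+ 2.

Lemma sigmoid_is_derive (u : R) : is_derive u 1 (@sigmoid R) (dsig u).
Proof.
have h1 : is_derive u 1 (expR \o -%R) (expR (- u) * (-1)).
  apply: is_derive1_comp.
have h2 : is_derive u 1 (fun v : R => 1 + expR (- v)) (expR (- u) * (-1)).
  have := is_deriveD (@is_derive_cst _ _ _ (1:R) u 1) h1.
  by rewrite add0r.
have hne : 1 + expR (- u) != 0 by rewrite gt_eqF // ltr_wpDr ?expR_ge0 // expR_gt0.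
have H := @is_deriveV R (fun v : R => 1 + expR (- v)) u _ _ hne h2.
have -> : @sigmoid R = (fun y => (1 + expR (- y))^-1).
  by apply/funext => y; rewrite /sigmoid div1r.
apply: is_derive_eq H _.
rewrite /dsig.
by rewrite mulrN1 scalerN scaleNr opprK [LHS]mulrC.
Qed.

Lemma dsig_bnd (c : R) : 0 <= dsig c <= 1/4.
Proof.
rewrite /dsig; set e := expR (- c).
have e0 : 0 < e by apply: expR_gt0.
have d0 : 0 < (1 + e) ^+ 2 by rewrite exprn_gt0 // ltr_wpDl.
apply/andP; split; first by rewrite divr_ge0 // ltW.
rewrite ler_pdivrMr // expr2; have := sqr_ge0 (1 - e); rewrite expr2; nra.
Qed.

Lemma sigmoid_lip (a b : R) : `|sigmoid a - sigmoid b| <= `|a - b| / 4.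
Proof.
wlog ab : a b / a <= b.
  move=> W; case: (leP a b) => [/W //|/ltW /W]; by rewrite distrC [`|b - a|]distrC.
have [c _ Hc] : exists2 c, c \in `[a, b]%R & sigmoid b - sigmoid a = dsig c * (b - a).
  apply: MVT_segment => //; first by move=> x _; exact: sigmoid_is_derive.
  apply: derivable_within_continuous => x _.
  by case: (sigmoid_is_derive x).
rewrite distrC Hc [`|a - b|]distrC normrM.
have /andP[h0 h1] := dsig_bnd c.
rewrite ger0_norm // mulrC ler_wpM2l //; lra.
Qed.

Lemma sigmoid_01 (a : R) : 0 <= sigmoid a <= 1.
Proof.
rewrite /sigmoid; have e0 : 0 < expR (- a) by apply: expR_gt0.
apply/andP; split; first by rewrite divr_ge0 //; lra.
rewrite ler_pdivrMr; lra.
Qed.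

Lemma cs_sq (n : nat) (a b : 'I_n -> R) :
  (\sum_i a i * b i) ^+ 2 <= (\sum_i a i ^+ 2) * (\sum_i b i ^+ 2).
Proof.
set A := \sum_i a i ^+ 2; set C := \sum_i b i ^+ 2; set D := \sum_i a i * b i.
have E1 : \sum_i \sum_j (a i * b j) ^+ 2 = A * C.
  rewrite /A /C big_distrl /=; apply: eq_bigr => i _.
  rewrite big_distrr /=; apply: eq_bigr => j _; by rewrite exprMn.
have E2 : \sum_i \sum_j (a j * b i) ^+ 2 = A * C.
  rewrite exchange_big /=; exact: E1.
have E3 : \sum_i \sum_j (a i * b j * (a j * b i)) = D ^+ 2.
  rewrite /D expr2 big_distrl /=; apply: eq_bigr => i _.
  rewrite big_distrr /=; apply: eq_bigr => j _; ring.
have E : \sum_i \sum_j (a i * b j - a j * b i) ^+ 2 = A * C - D ^+ 2 *+ 2 + A * C.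
  under eq_bigr do under eq_bigr do rewrite sqrrB.
  under eq_bigr do rewrite big_split /= sumrB.
  rewrite big_split /= sumrB E1 E2.
  rewrite -E3 -sumrMnl; congr (_ - _ + _); apply: eq_bigr => i _; by rewrite sumrMnl.
have : 0 <= \sum_i \sum_j (a i * b j - a j * b i) ^+ 2.
  by apply: sumr_ge0 => i _; apply: sumr_ge0 => j _; apply: sqr_ge0.
rewrite E; lra.
Qed.

Lemma wsum_bound (n : nat) (V : 'I_n -> R) (g : 'I_n -> R) (K : R) :
  0 <= K -> \sum_i `|V i| <= 1 -> (forall i, `|g i| <= K) ->
  `|\sum_i V i * g i| <= K.
Proof.
move=> K0 HV Hg.
apply: (le_trans (ler_norm_sum _ _ _)).
apply: (@le_trans _ _ (\sum_i `|V i| * K)).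
  apply: ler_sum => i _; rewrite normrM; apply: ler_wpM2l => //.
rewrite -mulr_suml; have := ler_wpM2r K0 HV; by rewrite mul1r.
Qed.

Lemma dot_bound (p : nat) (w v : 'rV[R]_p) : `|dotv w v| <= norm2 w * norm2 v.
Proof.
rewrite /dotv /norm2 -sqrtrM; last by apply: sumr_ge0 => i _; apply: sqr_ge0.
rewrite -sqrtr_sqr; apply: ler_wsqrtr; exact: cs_sq.
Qed.

Lemma max0_lip (s t : R) : `|Num.max s 0 - Num.max t 0| <= `|s - t|.
Proof.
rewrite /Num.max; case: (ltrP s 0) => hs; case: (ltrP t 0) => ht.
- by rewrite subrr normr0.
- rewrite sub0r normrN (ger0_norm ht) distrC ger0_norm; lra.
- rewrite subr0 (ger0_norm hs) ger0_norm; lra.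
- by [].
Qed.

Lemma dotvB (p : nat) (w x y : 'rV[R]_p) : dotv w x - dotv w y = dotv w (x - y).
Proof.
rewrite /dotv -sumrB; apply: eq_bigr => i _; by rewrite !mxE mulrBr.
Qed.

Lemma layer_inv (p : nat) (B : R) (l d : nat) (F : 'I_d -> 'rV[R]_p -> R) :
  0 <= B -> is_layer B l F ->
  forall i x y, 0 <= F i x <= 1 /\ `|F i x - F i y| <= B / 4 * norm2 (x - y).
Proof.
move=> B0; elim => {l d F} [d W b HW | l d d' F V HF IH HV] i x y.
- split; first exact: sigmoid_01.
  apply: (le_trans (sigmoid_lip _ _)).
  have -> : dotv (W i) x + b i - (dotv (W i) y + b i) = dotv (W i) (x - y).
    by rewrite -dotvB; ring.
  have n0 : 0 <= norm2 (x - y) by apply: sqrtr_ge0.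
  have := @dot_bound _ (W i) (x - y).
  have := ler_wpM2r n0 (HW i).
  lra.
- have K0 : 0 <= B / 4 * norm2 (x - y) by apply: mulr_ge0; [lra|apply: sqrtr_ge0].
  split.
    apply/andP; split; first by rewrite le_max lexx orbT.
    rewrite ge_max ler01 andbT.
    apply: (le_trans (ler_norm _)); apply: wsum_bound => // j.
    by have [/andP[h0 h1] _] := IH j x y; rewrite ger0_norm.
  apply: (le_trans (max0_lip _ _)).
  rewrite -sumrB.
  under eq_bigr do rewrite -mulrBr.
  apply: wsum_bound => // j.
  by have [_ h] := IH j x y.
Qed.

End S.

Theorem lemma1 (R : realType) (p : nat) (B : R) (L : nat) :
  0 < B -> (2 <= L)%N ->
  forall f : 'rV[R]_p -> R, inD B L f ->
  forall x y : 'rV[R]_p,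
    `|f x - f y| <= B / 4 * norm2 (x - y) /\ `|f x - f y| <= 2.
Proof.
move=> B0 _ f [d [F [w [HF [Hw ->]]]]] x y.
have B0' : 0 <= B by apply: ltW.
rewrite -sumrB.
under eq_bigr do rewrite -mulrBr.
split.
  apply: wsum_bound => //; first by apply: mulr_ge0; [lra|apply: sqrtr_ge0].
  by move=> j; have [_ h] := @layer_inv _ _ _ _ _ _ B0' HF j x y.
apply: (@le_trans _ _ 1); last lra.
apply: wsum_bound => //.
move=> j; have [/andP[h0 h1] _] := @layer_inv _ _ _ _ _ _ B0' HF j x y.
have [/andP[h2 h3] _] := @layer_inv _ _ _ _ _ _ B0' HF j y x.
rewrite ler_norml; apply/andP; split; lra.
Qed.
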